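(* Let $a:\mathbb{R}\to\mathbb{R}$ be Lipschitz continuous and let $k(x,y):=\frac1y\exp\big(i\frac{a(x)-a(x-y)}{y}\big)$ for $x\in\mathbb{R}$, $y\in\mathbb{R}\setminus\{0\}$. Then for all $x_0\in\mathbb{R}$ and $y\in\mathbb{R}\setminus\{0\}$, \[ \int_{\{|x|>2|y|\}}|k(x+x_0,x-y)-k(x+x_0,x)|\,dx\le 8(1+\|a'\|_\infty). \]
   Context: $\|a'\|_\infty$ denotes the essential supremum of the a.e. derivative of the Lipschitz function $a$ (its Lipschitz constant). *)

(* Defs.v *)
From HB Require Import structures.
From mathcomp Require Import all_boot all_order all_algebra.
From mathcomp Require Import all_classical all_reals all_analysis.
Set Implicit Arguments. Unset Strict Implicit. Unset Printing Implicit Defensive.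
Import Order.TTheory GRing.Theory Num.Theory.
Local Open Scope ring_scope.

(* Complex numbers represented as pairs (real part, imaginary part). *)
Definition kxy (R : realType) (a : R -> R) (x y : R) : R * R :=
  let t := (a x - a (x - y)) / y in (cos t / y, sin t / y).

Definition cdist (R : realType) (z w : R * R) : R :=
  Num.sqrt ((z.1 - w.1) ^+ 2 + (z.2 - w.2) ^+ 2).

(* Main.v *)
Require Import Defs.
From mathcomp Require Import all_boot all_order all_algebra.
From mathcomp Require Import all_classical all_reals all_analysis.
From mathcomp Require Import lra ring measurable_realfun.
Import Order.TTheory GRing.Theory Num.Theory.
Import numFieldNormedType.Exports.
Local Open Scope classical_set_scope.
Local Open Scope ring_scope.
Set Implicit Arguments. Unset Strict Implicit.

Section S0.
Variable R : realType.
Lemma sin_le_id (t : R) : 0 <= t -> sin t <= t.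
Proof.
rewrite le_eqVlt => /predU1P[<-|t0]; first by rewrite sin0.
have dh (z : R) : is_derive z 1 (fun z : R => z - sin z) (1 - cos z).
  apply: is_derive_eq.
  rewrite /GRing.scale /=. lra.
have [c _ h] := @MVT R _ _ 0 t t0 (fun z _ => dh z)
  (derivable_within_continuous (fun z _ => @ex_derive _ _ _ _ _ _ _ (dh z))).
have : 0 <= (1 - cos c) * (t - 0) by rewrite mulr_ge0 // ?subr_ge0 ?cos_le1 // ltW.
rewrite -h sin0; lra.
Qed.

Lemma cos_ge (t : R) : 1 - t ^+ 2 / 2 <= cos t.
Proof.
wlog t0 : t / 0 <= t.
  move=> H; have [/H//|t0] := leP 0 t.
  by rewrite -cosN -sqrrN; apply: H; lra.
move: t0; rewrite le_eqVlt => /predU1P[<-|t0]; first by rewrite cos0; lra.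
have dh (z : R) : is_derive z 1 (fun z : R => - 1 + cos z + z ^+ 2 / 2) (z - sin z).
  apply: is_derive_eq.
  rewrite /GRing.scale /=. lra.
have [c cin h] := @MVT R _ _ 0 t t0 (fun z _ => dh z)
  (derivable_within_continuous (fun z _ => @ex_derive _ _ _ _ _ _ _ (dh z))).
move: cin; rewrite in_itv /= => /andP[c0 _].
have : 0 <= (c - sin c) * (t - 0).
  by rewrite mulr_ge0 // ?subr_ge0 ?sin_le_id ?ltW.
rewrite -h cos0; lra.
Qed.
End S0.
Section S.
Variable R : realType.
Lemma pt_bound (a : R -> R) (L : R) (hL : 0 <= L)
  (ha : forall x y : R, `|a x - a y| <= L * `|x - y|) (x0 y x : R)
  (hx : 2 * `|y| < `|x|) :
  cdist (kxy a (x + x0) (x - y)) (kxy a (x + x0) x)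
    <= 4 * (1 + L) * `|y| * (x ^-1) ^+ 2.
Proof.
rewrite /cdist /kxy /=.
have [u uE] : {u | u = x - y} by exists (x - y).
rewrite -uE.
have yE : y = x - u by rewrite uE; ring.
have hA : `|a (x + x0) - a (x + x0 - u)| <= L * `|u|.
  by have := ha (x + x0) (x + x0 - u); rewrite (_ : x + x0 - (x + x0 - u) = u) //; ring.
have hAB : `|(a (x + x0) - a (x + x0 - u)) - (a (x + x0) - a (x + x0 - x))| <= L * `|y|.
  rewrite (_ : (a (x + x0) - a (x + x0 - u)) - (a (x + x0) - a (x + x0 - x)) = a (x + x0 - x) - a (x + x0 - u)); last by ring.
  apply: le_trans (ha _ _) _.
  rewrite (_ : x + x0 - x - (x + x0 - u) = - y); last by rewrite yE; ring.
  by rewrite normrN.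
move: hA hAB.
set A := a (x + x0) - a (x + x0 - u).
set B := a (x + x0) - a (x + x0 - x).
move=> hA hAB.
have hux : `|x| <= 2 * `|u|.
  have := lerB_dist x y; rewrite -uE; lra.
have y0 : 0 <= `|y| by [].
have x0' : x != 0 by rewrite -normr_gt0; lra.
have u0 : u != 0 by rewrite -normr_gt0; lra.
have ux0 : 0 < u * x.
  have h1 : x * y <= `|x| * `|y| by rewrite -normrM ler_norm.
  have h2 : `|x| ^+ 2 = x ^+ 2 by rewrite real_normK ?num_real.
  rewrite uE; nra.
clear uE.
set p := u^-1. set q := x^-1.
have hup : `|u| * `|p| = 1 by rewrite -normrM mulfV // normr1.
have hxq : `|x| * `|q| = 1 by rewrite -normrM mulfV // normr1.
have pq0 : 0 < p * q by rewrite /p /q -invfM invr_gt0.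
have pqa : p * q = `|p| * `|q| by rewrite -normrM gtr0_norm.
have pmq : p - q = y * (p * q) by rewrite yE /p /q; field; rewrite u0 x0'.
set t1 := A / u. set t2 := B / x.
have EQ : (cos t1 / u - cos t2 / x) ^+ 2 + (sin t1 / u - sin t2 / x) ^+ 2
   = (p - q) ^+ 2 + 2 * (1 - cos (t1 - t2)) * (p * q).
  rewrite cosB; apply/eqP; rewrite -subr_eq0; apply/eqP.
  transitivity ((cos t1 ^+ 2 + sin t1 ^+ 2 - 1) * p ^+ 2 + (cos t2 ^+ 2 + sin t2 ^+ 2 - 1) * q ^+ 2).
    rewrite /p /q; ring.
  by rewrite !cos2Dsin2 !subrr !mul0r addr0.
rewrite EQ.
have hc := cos_ge (t1 - t2).
have hs : t1 - t2 = (A * p) * y * q + (A - B) * q.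
  rewrite /t1 /t2 -/p -/q. rewrite (_ : A * p * y * q = A * (y * (p * q))); last by ring.
  rewrite -pmq; ring.
have hAp : `|A * p| <= L.
  by rewrite normrM; apply: le_trans (ler_wpM2r (normr_ge0 p) hA) _; rewrite -mulrA hup mulr1.

have hsb : `|t1 - t2| <= 2 * L * `|y| * `|q|.
  rewrite hs; apply: (le_trans (ler_normD _ _)); rewrite !normrM.
  rewrite normrM in hAp.
  have h1 : `|A| * `|p| * `|y| * `|q| <= L * `|y| * `|q| by rewrite ler_wpM2r // ler_wpM2r.
  have h2 : `|A - B| * `|q| <= L * `|y| * `|q| by rewrite ler_wpM2r.
  lra.
have hpq : `|p| <= 2 * `|q|.
  have := ler_wpM2r (mulr_ge0 (normr_ge0 p) (normr_ge0 q)) hux.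
  rewrite (_ : `|x| * (`|p| * `|q|) = `|p| * (`|x| * `|q|)); last by ring.
  rewrite (_ : 2 * `|u| * (`|p| * `|q|) = 2 * `|q| * (`|u| * `|p|)); last by ring.
  by rewrite hxq hup !mulr1.
rewrite -/q.
set s := t1 - t2.
move: hc hsb; rewrite -/s => hc hsb.
have Q1 : (p - q) ^+ 2 + 2 * (1 - cos s) * (p * q) <= (p - q) ^+ 2 + s ^+ 2 * (p * q).
  rewrite lerD2l; apply: ler_wpM2r; [exact: ltW | lra].
apply: le_trans (ler_wsqrtr Q1) _.
have e1 : (p - q) ^+ 2 = `|y| ^+ 2 * (`|p| * `|q|) ^+ 2.
  by rewrite pmq exprMn pqa real_normK ?num_real.
have e2 : s ^+ 2 = `|s| ^+ 2 by rewrite real_normK ?num_real.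
rewrite e1 e2 pqa.
have P0 : 0 <= `|p| * `|q| by [].
have hpq2 : `|p| * `|q| <= 2 * `|q| ^+ 2 by rewrite expr2 mulrA ler_wpM2r.
have h3 : (`|p| * `|q|) ^+ 2 <= (2 * `|q| ^+ 2) ^+ 2.
  by rewrite [X in _ <= X]expr2; apply: ler_pM.
have h4 : `|s| ^+ 2 * (`|p| * `|q|) <= (2 * L * `|y| * `|q|) ^+ 2 * (2 * `|q| ^+ 2).
  apply: ler_pM => //.
  by rewrite !expr2; apply: ler_pM.
have h5 : `|y| ^+ 2 * (`|p| * `|q|) ^+ 2 <= `|y| ^+ 2 * (2 * `|q| ^+ 2) ^+ 2.
  by rewrite ler_wpM2l.
have h6 : `|y| ^+ 2 * (2 * `|q| ^+ 2) ^+ 2 + (2 * L * `|y| * `|q|) ^+ 2 * (2 * `|q| ^+ 2)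
   <= (4 * (1 + L) * `|y| * `|q| ^+ 2) ^+ 2.
  have -> : `|y| ^+ 2 * (2 * `|q| ^+ 2) ^+ 2 + (2 * L * `|y| * `|q|) ^+ 2 * (2 * `|q| ^+ 2)
    = (4 + 8 * L ^+ 2) * (`|y| ^+ 2 * `|q| ^+ 4) by ring.
  have -> : (4 * (1 + L) * `|y| * `|q| ^+ 2) ^+ 2 = (16 * (1 + L) ^+ 2) * (`|y| ^+ 2 * `|q| ^+ 4) by ring.
  rewrite ler_wpM2r //; nra.
apply: le_trans (ler_wsqrtr (le_trans (lerD h5 h4) h6)) _.
rewrite sqrtr_sqr ger0_norm; last by rewrite !mulr_ge0 //; lra.
by rewrite real_normK ?num_real.
Qed.
End S.
Section S2.
Variable R : realType.
Local Open Scope ereal_scope.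
Lemma le_int_nm (D : set R) (f1 f2 : R -> \bar R) :
  (forall x, D x -> 0 <= f1 x) -> (forall x, D x -> f1 x <= f2 x) ->
  \int[lebesgue_measure]_(x in D) f1 x <= \int[lebesgue_measure]_(x in D) f2 x.
Proof.
move=> f10 f12.
have f20 : forall x, D x -> 0 <= f2 x by move=> x Dx; apply: le_trans (f10 x Dx) (f12 x Dx).
rewrite (ge0_integralE lebesgue_measure f10) (ge0_integralE lebesgue_measure f20).
apply: ereal_sup_le => _ [h hle <-]; exists h => //= x.
exact: le_trans (hle x) (lee_restrict f12 x).
Qed.
End S2.

Section S3.
Variable R : realType.
Lemma dF (K x : R) : x != 0 -> is_derive x 1 (fun z : R => - K * z^-1) (K * (x^-1) ^+ 2).
Proof.
move=> x0.
have h := is_deriveZ (- K) (is_deriveV x0 (is_derive_id x 1)).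
apply: (is_derive_eq h).
rewrite /GRing.scale /= mulr1 expr2 invfM; ring.
Qed.
End S3.
Section S4.
Variable R : realType.
Local Open Scope ereal_scope.
Lemma cont_f (K x : R) : (x != 0)%R -> {for x, continuous (fun z : R => (K * (z^-1) ^+ 2)%R)}.
Proof.
move=> x0.
apply: (@continuousM _ _ (cst K) (fun z : R => (z^-1 * z^-1)%R)); first exact: cvg_cst.
by apply: continuousM; apply: inv_continuous.
Qed.

Lemma int_tail (K c : R) : (0 < c)%R -> (0 <= K)%R ->
  \int[lebesgue_measure]_(x in `[c, +oo[) (K * (x^-1) ^+ 2)%:E = (K / c)%:E.
Proof.
move=> c0 K0.
have nz x : (c <= x)%R -> (x != 0)%R by move=> cx; rewrite gt_eqF // (lt_le_trans c0 cx).
rewrite (@ge0_continuous_FTC2y R (fun x => K * (x^-1) ^+ 2)%R (fun z : R => - K * z^-1)%R c 0%R).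
- by rewrite sub0e -EFinN mulNr opprK.
- by move=> x _; rewrite mulr_ge0 // sqr_ge0.
- apply/continuous_within_itvcyP; split.
    move=> x; rewrite in_itv /= andbT => cx; apply: cont_f; apply: nz; exact: ltW.
  by apply: cvg_at_right_filter; apply: cont_f; apply: nz.
- rewrite -(mulr0 (- K)%R); apply: cvgM; first exact: cvg_cst.
  apply/gtr0_cvgV0; first by near=> z.
  exact: cvg_id.
- by move=> x cx; apply: (@ex_derive _ _ _ _ _ _ _ (dF K (nz _ (ltW cx)))).
- apply: cvg_at_right_filter.
  have := @continuousM _ _ (cst (- K)%R) (@GRing.inv R) c (cvg_cst _) (inv_continuous (nz c (lexx c))).
  by move=> h; apply: h.
- move=> x; rewrite in_itv /= andbT => cx.
  by rewrite derive1E (@derive_val _ _ _ _ _ _ _ (dF K (nz _ (ltW cx)))).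
Unshelve. all: by end_near.
Qed.
End S4.

Unset Implicit Arguments. Set Strict Implicit.
Theorem lemma2p1 (R : realType) (a : R -> R) (L : R)
  (hL : 0 <= L) (ha : forall x y : R, `|a x - a y| <= L * `|x - y|)
  (x0 y : R) (hy : y != 0) :
  (\int[lebesgue_measure]_(x in [set x : R | (2 * `|y| < `|x|)%R])
      (cdist (kxy a (x + x0) (x - y)) (kxy a (x + x0) x))%:E
   <= (8 * (1 + L))%:E)%E.
Proof.
have y0 : 0 < `|y| by rewrite normr_gt0.
set c := 2 * `|y|.
have c0 : 0 < c by rewrite /c; lra.
set K := 4 * (1 + L) * `|y|.
have K0 : 0 <= K by rewrite /K !mulr_ge0 //; lra.
pose g := fun x : R => K * (x^-1) ^+ 2.
apply: (@le_trans _ _ (\int[lebesgue_measure]_(x in [set x : R | (2 * `|y| < `|x|)%R]) (g x)%:E)%E).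
  apply: le_int_nm.
    by move=> x _; rewrite lee_fin sqrtr_ge0.
  by move=> x hx; rewrite lee_fin; apply: pt_bound.
have DE : [set x : R | (2 * `|y| < `|x|)%R] = `]-oo, - c[ `|` `]c, +oo[.
  apply/seteqP; split => x /=; rewrite !in_itv /= ltr_normr -/c.
    by move=> /orP[h|h]; [right|left]; lra.
  by case=> h; apply/orP; [right|left]; lra.
have nzU x : (`]-oo, - c[ `|` `]c, +oo[) x -> x != 0.
  by case; rewrite /= in_itv /= => h; apply/eqP => x0e; move: h; rewrite x0e; lra.
rewrite DE ge0_integral_setU //=; last 3 first.
- apply/measurable_EFinP; apply: open_continuous_measurable_fun.
    by apply: openU; exact: interval_open.
  by move=> x; rewrite inE => /nzU; apply: cont_f.
- by move=> x _; rewrite lee_fin /g mulr_ge0 // sqr_ge0.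
- rewrite disj_set2E; apply/eqP; rewrite -subset0 => x [] /=; rewrite !in_itv /= => h1 h2; lra.
rewrite integral_itv_bndo_bndc; last first.
  apply/measurable_EFinP; apply: open_continuous_measurable_fun; first exact: interval_open.
  by move=> x; rewrite inE => hx; apply: cont_f; apply: nzU; left.
rewrite integral_itv_obnd_cbnd; last first.
  apply/measurable_EFinP; apply: open_continuous_measurable_fun; first exact: interval_open.
  by move=> x; rewrite inE => hx; apply: cont_f; apply: nzU; right.
rewrite ge0_integration_by_substitutionNy; last 2 first.
- apply: continuous_in_subspaceT => x; rewrite inE /= in_itv /= => hx.
  by apply: cont_f; apply/eqP => x0e; move: hx; rewrite x0e; lra.
- by move=> x _; rewrite /g mulr_ge0 // sqr_ge0.
have -> : (\int[lebesgue_measure]_(x in `[c, +oo[) ((g \o -%R) x)%:E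
   = \int[lebesgue_measure]_(x in `[c, +oo[) (g x)%:E)%E.
  by apply: eq_integral => x _; rewrite /g /= invrN sqrrN.
rewrite /g int_tail // -EFinD lee_fin.
have -> : K / c = 2 * (1 + L) by rewrite /K /c; field; rewrite gt_eqF.
lra.
Qed.
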